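(* Let $(p_{n,m})_{n,m\in\omega}$ be a matrix of terms such that: (1) each $p_{n,m}$ depends only on variables $x_{i,j}$ with $i<n$; (2) for every $n$ there are infinitely many $m$ with $p_{n,m}=^*0$ (the constant term); (3) for all $i,j$ there are infinitely many $n$ such that for every $M\in\omega$ there are $m_0,\dots,m_k>M$ such that $x_{i,j}$ is determined by $p_{n,m_0},\dots,p_{n,m_k}$. Then there is $q\in R_{\omega\cdot\omega+\omega}$ with $\sigma(q)=\bar p$, i.e. $q_{n,m}=p_{n,m}$ for all $n,m\in\omega$.
   Context: Throughout, $\delta$ denotes a nonzero countable limit ordinal. Terms: variables are $x_{l,k}$ ($l,k\in\omega$), each taking values in $\{0,1\}$. A term $t$ is given by a finite sequence of variables $(v_0,\dots,v_{r-1})$ and a function $F:2^r\to2$; a variable $v$ is identified with the term $((v),\mathrm{id})$. An assignment $a$ maps variables to $\{0,1\}$ and extends to terms by $t\circ a=F(v_0\circ a,\dots,v_{r-1}\circ a)$. Terms are identified modulo $t=^*s$ iff $t\circ a=s\circ a$ for all assignments $a$. A term depends only on variables in $Y$ if it is $=^*$ to a term using only variables from $Y$. A term or variable $s$ is determined by terms $t_0,\dots,t_n$ if for all assignments $a,b$, $(t_i\circ a)_{i\le n}=(t_i\circ b)_{i\le n}$ implies $s\circ a=s\circ b$. The forcing $\tilde P$: a condition $\tilde p$ has height $\mathrm{ht}(\tilde p)<\omega_1$ and consists of, for every limit $\delta<\mathrm{ht}(\tilde p)$ and $n,m,k\in\omega$: a cofinal $\nu_{\delta,n,m}\subseteq\delta$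 of order type $\omega$, with $\nu_{\delta,n,m_1}\cap\nu_{\delta,n,m_2}=\emptyset$ for $m_1\ne m_2$; a strictly increasing $j_{\delta,n,m}:\omega\to\omega$; and a surjective $f_{\delta,n,m,k}:2^{[j_{\delta,n,m}(k),\,j_{\delta,n,m}(k+1)-1]}\to2$; ordered by extension. For $\eta$ into $2$ with domain containing $\nu_{\delta,n,m}$, with $\zeta_i$ the $i$-th element of $\nu_{\delta,n,m}$, $g_{\delta,n,m,k}(\eta)=f_{\delta,n,m,k}((\eta(\zeta_i))_{j_{\delta,n,m}(k)\le i<j_{\delta,n,m}(k+1)})$. The set $R$: $R=\bigcup_{\delta<\omega_1}R_{\delta+\omega}$, where $p\in R_{\delta+\omega}$ consists of $\tilde p\in\tilde P$ with $\mathrm{ht}(\tilde p)=\delta+1$ and terms $\bar p=(p_{n,\alpha})_{n\in\omega,\alpha<\delta+\omega}$ such that $p_{n,\delta+m}=x_{n,m}$; for $\alpha<\delta$, $p_{n,\alpha}$ depends only on variables $x_{l,k}$ with $l<n$; and for all $n,m\in\omega$ and all limit $\alpha\le\delta$ there is $k_0$ such that for every assignment $a$, $p_{n,\alpha+m}\circ a=g_{\alpha,n,m,k}((p_{n+1,\zeta}\circ a)_{\zeta<\alpha})$ for all $k\ge k_0$ (computed from $\tilde p$). For $p\in R$, $\sigma(p)=(p_{n,m})_{n,m\in\omega}$. *)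

(* Defs.v *)
From mathcomp Require Import all_boot.
Set Implicit Arguments. Unset Strict Implicit. Unset Printing Implicit Defensive.

(* the variable x_{l,k} is encoded as the pair (l,k) *)
Definition var := (nat * nat)%type.
Definition assignment := nat -> nat -> bool.

(* a term: a finite sequence of variables (v_0,...,v_{r-1}) and F : 2^r -> 2,
   where 2^r is represented by boolean lists (only lists of length r matter) *)
Record term := Term { tvars : seq var; tfun : seq bool -> bool }.

Definition eval (t : term) (a : assignment) : bool :=
  tfun t [seq a v.1 v.2 | v <- tvars t].

Definition teq (t s : term) : Prop := forall a, eval t a = eval s a.

Definition var_term (l k : nat) : term := Term [:: (l, k)] (fun bs => head false bs).

Definition zero_term : term := Term [::] (fun _ => false).

Definition depends_only (Y : var -> Prop) (t : term) : Prop :=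
  exists s, teq t s /\ forall v, v \in tvars s -> Y v.

Definition determined (s : term) (ts : seq term) : Prop :=
  forall a b, [seq eval t a | t <- ts] = [seq eval t b | t <- ts] -> eval s a = eval s b.

(* OFin k j = omega*k + j ;  OTop j = omega*omega + j *)
Inductive ord := OFin (k j : nat) | OTop (j : nat).

Definition olt (x y : ord) : Prop :=
  match x, y with
  | OFin k j, OFin k' j' => (k < k')%N \/ (k = k' /\ (j < j')%N)
  | OFin _ _, OTop _ => True
  | OTop _, OFin _ _ => False
  | OTop j, OTop j' => (j < j')%N
  end.

Definition is_limit (x : ord) : Prop :=
  match x with
  | OFin k j => (0 < k)%N /\ j = 0%N
  | OTop j => j = 0%N
  end.

Definition oadd (x : ord) (m : nat) : ord :=
  match x with
  | OFin k j => OFin k (j + m)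
  | OTop j => OTop (j + m)
  end.

Definition omega_omega : ord := OTop 0.

(* data for every limit alpha <= omega*omega (values at non-limits are irrelevant):
   nu alpha n m i  = the i-th element zeta_i of nu_{alpha,n,m}
   jj alpha n m    = j_{alpha,n,m}
   ff alpha n m k  = f_{alpha,n,m,k}, acting on the list
                     (eta(zeta_i))_{j(k) <= i < j(k+1)} *)
Record cond := Cond {
  nu : ord -> nat -> nat -> nat -> ord;
  jj : ord -> nat -> nat -> nat -> nat;
  ff : ord -> nat -> nat -> nat -> seq bool -> bool }.

Definition cond_ok (c : cond) : Prop :=
  forall alpha, is_limit alpha -> forall n m,
    (forall i, olt (nu c alpha n m i) alpha) /\
    (forall i, olt (nu c alpha n m i) (nu c alpha n m i.+1)) /\
    (forall beta, olt beta alpha -> exists i, olt beta (nu c alpha n m i)) /\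
    (forall m', m <> m' -> forall i i', nu c alpha n m i <> nu c alpha n m' i') /\
    (forall k, (jj c alpha n m k < jj c alpha n m k.+1)%N) /\
    (forall k (b : bool), exists bs : seq bool,
        size bs = (jj c alpha n m k.+1 - jj c alpha n m k)%N /\ ff c alpha n m k bs = b).

Definition g (c : cond) (alpha : ord) (n m k : nat) (eta : ord -> bool) : bool :=
  ff c alpha n m k
     [seq eta (nu c alpha n m i)
     | i <- iota (jj c alpha n m k) (jj c alpha n m k.+1 - jj c alpha n m k)].

Record Relt := RElt { rcond : cond; rterm : nat -> ord -> term }.

Definition in_R_oo (q : Relt) : Prop :=
  cond_ok (rcond q) /\
  (forall n m, teq (rterm q n (oadd omega_omega m)) (var_term n m)) /\
  (forall n alpha, olt alpha omega_omega ->
     depends_only (fun v => (v.1 < n)%N) (rterm q n alpha)) /\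
  (forall n m alpha, is_limit alpha ->
     exists k0, forall (a : assignment) k, (k0 <= k)%N ->
       eval (rterm q n (oadd alpha m)) a
       = g (rcond q) alpha n m k (fun zeta => eval (rterm q n.+1 zeta) a)).

(* Main.v *)
From Stdlib Require Import Cantor ClassicalEpsilon.
Require Import Defs.
From mathcomp Require Import all_boot zify.
Set Implicit Arguments. Unset Strict Implicit. Unset Printing Implicit Defensive.

Lemma cantor_lt x y : Cantor.to_nat (x, y) < Cantor.to_nat (x, y.+1).
Proof.
have h1 := Cantor.to_nat_spec x y. have h2 := Cantor.to_nat_spec x y.+1.
apply/ltP. nia.
Qed.

Lemma cantor_mono x y y' : y < y' -> Cantor.to_nat (x, y) < Cantor.to_nat (x, y').
Proof.
elim: y' => // y' IH; rewrite ltnS leq_eqVlt => /orP[/eqP->|h].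
  exact: cantor_lt.
exact: ltn_trans (IH h) (cantor_lt _ _).
Qed.

Lemma cantor_ge x y : y <= Cantor.to_nat (x, y).
Proof. have := Cantor.to_nat_non_decreasing x y. move/leP. lia. Qed.

Lemma cantor_inj p q : Cantor.to_nat p = Cantor.to_nat q -> p = q.
Proof. exact: Cantor.to_nat_inj. Qed.

(* generic enumeration of a union of consecutive blocks *)
Section Walk.
Variables (lo sz : nat -> nat).

Fixpoint Jr (t0 n : nat) : nat := if n is n'.+1 then Jr t0 n' + sz (t0 + n') else 0.

Fixpoint walk (fuel i t : nat) : nat :=
  match fuel with
  | 0 => lo t + i
  | f.+1 => if i < sz t then lo t + i else walk f (i - sz t) t.+1
  end.

Definition Ewalk i := walk i i 0.
Definition Jw t := Jr 0 t.

Lemma JrS t0 n : Jr t0 n.+1 = sz t0 + Jr t0.+1 n.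
Proof.
elim: n t0 => [|n IH] t0; first by rewrite /= !addn0 add0n.
rewrite -[Jr t0 n.+2]/(Jr t0 n.+1 + sz (t0 + n.+1)) IH -[Jr t0.+1 n.+1]/(Jr t0.+1 n + sz (t0.+1 + n)) addSnnS addnA //.
Qed.

Hypothesis hsz : forall t, 0 < sz t.
Hypothesis hlo : forall t, lo t + sz t <= lo t.+1.

Lemma walk_spec n fuel t0 d : n <= fuel -> d < sz (t0 + n) ->
  walk fuel (Jr t0 n + d) t0 = lo (t0 + n) + d.
Proof.
elim: n fuel t0 => [|n IH] fuel t0 hf hd.
  rewrite addn0 in hd *; case: fuel hf => [|f] _ /=; first by [].
  by rewrite hd.
case: fuel hf => [|f] //; rewrite ltnS => hf.
rewrite JrS /= -addnA.
have -> : (sz t0 + (Jr t0.+1 n + d) < sz t0) = false by apply/negbTE; rewrite -leqNgt leq_addr.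
rewrite addKn IH //; first by rewrite addSnnS.
by rewrite addSnnS.
Qed.

Lemma Jw_ge t : t <= Jw t.
Proof. rewrite /Jw; elim: t => //= t IH; have := hsz (0 + t); lia. Qed.

Lemma Ewalk_at t d : d < sz t -> Ewalk (Jw t + d) = lo t + d.
Proof.
move=> hd; rewrite /Ewalk /Jw walk_spec ?add0n //.
by apply: leq_trans (Jw_ge t) (leq_addr _ _).
Qed.

Lemma decomp i : exists t d, d < sz t /\ i = Jw t + d.
Proof.
elim: i => [|i [t [d [hd ->]]]]; first by exists 0, 0; rewrite hsz.
case: (ltnP d.+1 (sz t)) => h.
  by exists t, d.+1; rewrite addnS.
exists t.+1, 0; split; first exact: hsz.
rewrite /Jw /= add0n addn0; have : d.+1 = sz t by apply/eqP; rewrite eqn_leq hd h.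
move=> <-; by rewrite addnS.
Qed.

Lemma Ewalk_incr i : Ewalk i < Ewalk i.+1.
Proof.
have [t [d [hd ->]]] := decomp i.
rewrite Ewalk_at //.
case: (ltnP d.+1 (sz t)) => h.
  by rewrite -[(Jw t + d).+1]addnS Ewalk_at // addnS.
have hd' : d.+1 = sz t by apply/eqP; rewrite eqn_leq hd h.
have -> : (Jw t + d).+1 = Jw t.+1 + 0 by rewrite /Jw /= add0n addn0 -hd' addnS.
rewrite Ewalk_at // addn0; have := hlo t; lia.
Qed.

Lemma Ewalk_mono i i' : i < i' -> Ewalk i < Ewalk i'.
Proof.
elim: i' => // i' IH; rewrite ltnS leq_eqVlt => /orP[/eqP->|h].
  exact: Ewalk_incr.
exact: ltn_trans (IH h) (Ewalk_incr _).
Qed.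

Lemma Ewalk_ge i : i <= Ewalk i.
Proof. elim: i => // i IH; have := Ewalk_incr i; lia. Qed.

Lemma Ewalk_in i : exists t, lo t <= Ewalk i < lo t + sz t.
Proof.
have [t [d [hd ->]]] := decomp i; exists t; rewrite Ewalk_at //; lia.
Qed.

Lemma Jw_diff t : Jw t.+1 - Jw t = sz t.
Proof. by rewrite /Jw /= add0n addKn. Qed.

Lemma Jw_incr t : Jw t < Jw t.+1.
Proof. by rewrite /Jw /= add0n -addn1 leq_add2l hsz. Qed.

Lemma Ewalk_block t : [seq Ewalk i | i <- iota (Jw t) (Jw t.+1 - Jw t)] = iota (lo t) (sz t).
Proof.
rewrite Jw_diff; apply: (@eq_from_nth _ 0); rewrite size_map !size_iota //.
move=> k hk; rewrite (nth_map 0) ?size_iota // !nth_iota // Ewalk_at //.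
Qed.
End Walk.
Arguments Cantor.to_nat : simpl never.
Section Main.
Variable p : nat -> nat -> term.

Definition Good i j n : Prop := forall M, exists ms : seq nat,
  ms <> [::] /\ all (fun m => M < m) ms /\ determined (var_term i j) [seq p n m | m <- ms].

Definition ijof (s : nat) := Cantor.of_nat (Cantor.of_nat s).1.

Definition cnd k N s : Prop := (ijof s).1 < N /\ Good (ijof s).1 (ijof s).2 (N + k).

Definition T k N s : term :=
  if excluded_middle_informative (cnd k N s) then var_term (ijof s).1 (ijof s).2 else zero_term.

Definition vals N M c (a : assignment) := [seq eval (p N.+1 m) a | m <- iota M.+1 (c - M)].

Definition Q N s M c : Prop :=
  [/\ M < c,
      (forall a b, vals N M c a = vals N M c b -> eval (T 1 N s) a = eval (T 1 N s) b) &
      ((exists a, eval (T 1 N s) a = true) \/ (exists m0, M < m0 <= c /\ teq (p N.+1 m0) zero_term))].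

Definition C N s M := epsilon (inhabits 0) (Q N s M).

Fixpoint bb N u := if u is u'.+1 then C N (Cantor.of_nat u').1 (bb N u') else 0.

Definition uu s t := Cantor.to_nat (s, t).
Definition lo1 N s t := (bb N (uu s t)).+1.
Definition sz1 N s t := bb N (uu s t).+1 - bb N (uu s t).

Definition F N s M c (bs : seq bool) : bool :=
  if excluded_middle_informative (exists a, vals N M c a = bs /\ eval (T 1 N s) a = false)
  then false else true.

Definition nextgood i j N := epsilon (inhabits 0) (fun n => N < n /\ Good i j n).
Fixpoint rows n m t := if t is t'.+1 then nextgood n m (rows n m t') else nextgood n m n.+1.

Definition sel k N s t :=
  Cantor.to_nat (if excluded_middle_informative (cnd k N s) then (Cantor.of_nat s).1
            else Cantor.to_nat (N.+1, 0), Cantor.to_nat (s, t)).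

Definition topslot n m := Cantor.to_nat (Cantor.to_nat (n, m), 0).

Definition nu0 (alpha : ord) (n m i : nat) : ord :=
  match alpha with
  | OTop _ => OFin (rows n m i - n.+1) (topslot n m)
  | OFin 0 _ => OFin 0 0
  | OFin 1 _ => OFin 0 (Ewalk (lo1 n m) (sz1 n m) i)
  | OFin k.+2 _ => OFin k.+1 (sel k.+2 n m i)
  end.

Definition jj0 (alpha : ord) (n m t : nat) : nat :=
  match alpha with
  | OFin 1 _ => Jw (sz1 n m) t
  | _ => t
  end.

Definition ff0 (alpha : ord) (n m t : nat) : seq bool -> bool :=
  match alpha with
  | OFin 1 _ => F n m (bb n (uu m t)) (bb n (uu m t).+1)
  | _ => fun bs => head false bs
  end.

Definition rt (n : nat) (alpha : ord) : term :=
  match alpha with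
  | OTop j => var_term n j
  | OFin 0 j => p n j
  | OFin k j => T k n j
  end.

Definition theq := RElt (Cond nu0 jj0 ff0) rt.

Lemma T_var k N s : cnd k N s -> T k N s = var_term (ijof s).1 (ijof s).2.
Proof. by rewrite /T; case: excluded_middle_informative. Qed.

Lemma T_zero k N s : ~ cnd k N s -> T k N s = zero_term.
Proof. by rewrite /T; case: excluded_middle_informative. Qed.

Lemma T_false k N s : eval (T k N s) (fun _ _ => false) = false.
Proof. by rewrite /T; case: excluded_middle_informative. Qed.

Lemma map_eq_mem (A : Type) (x : nat) (f g : nat -> A) (l : seq nat) :
  [seq f i | i <- l] = [seq g i | i <- l] -> x \in l -> f x = g x.
Proof.
elim: l => //= y l IH [e1 e2]; rewrite in_cons => /orP[/eqP->//|]; exact: IH.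
Qed.

Lemma le_foldr_max (ms : seq nat) m : m \in ms -> m <= foldr maxn 0 ms.
Proof.
elim: ms => //= y ms IH; rewrite in_cons => /orP[/eqP->|h]; first exact: leq_maxl.
exact: leq_trans (IH h) (leq_maxr _ _).
Qed.

Hypothesis H1 : forall n m, depends_only (fun v => (v.1 < n)%N) (p n m).
Hypothesis H2 : forall n M, exists m, (M < m)%N /\ teq (p n m) zero_term.
Hypothesis H3 : forall i j N, exists n, (N < n)%N /\ Good i j n.

Lemma Q_ex N s M : exists c, Q N s M c.
Proof.
case: (excluded_middle_informative (cnd 1 N s)) => hc.
  have [hi hg] := hc; rewrite addn1 in hg.
  have [ms [hne [hall hdet]]] := hg M.
  exists (foldr maxn 0 ms); split.
  - case: ms hne hall {hdet} => [//|x ms] _ /= /andP[hx _].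
    exact: leq_trans hx (leq_maxl _ _).
  - move=> a b hv; rewrite T_var //; apply: hdet; rewrite -!map_comp.
    apply/eq_in_map => m hm /=; apply: (map_eq_mem hv).
    rewrite mem_iota; move/allP: hall => /(_ m hm) hM; have := le_foldr_max hm; lia.
  - by left; exists (fun _ _ => true); rewrite T_var.
have [m0 [hm0 hz]] := H2 N.+1 M.
exists m0; split => //.
  by move=> a b _; rewrite T_zero.
by right; exists m0; rewrite hm0 leqnn.
Qed.

Lemma C_spec N s M : Q N s M (C N s M).
Proof. rewrite /C; apply: epsilon_spec; exact: Q_ex. Qed.

Lemma F_val N s M c a : Q N s M c -> F N s M c (vals N M c a) = eval (T 1 N s) a.
Proof.
case=> _ hdet _; rewrite /F; case: excluded_middle_informative => [[a' [hv hf]]|hn].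
  by rewrite -(hdet _ _ hv).
case e: (eval (T 1 N s) a) => //; exfalso; apply: hn; by exists a.
Qed.

Lemma F_surj N s M c b : Q N s M c -> exists bs, size bs = c - M /\ F N s M c bs = b.
Proof.
move=> hQ; case: b.
  case: (hQ) => _ _ [[a ha]|[m0 [hm0 hz]]].
    by exists (vals N M c a); rewrite F_val // /vals size_map size_iota.
  exists (nseq (c - M) true); split; first by rewrite size_nseq.
  rewrite /F; destruct excluded_middle_informative as [[a [hv hf]]|]; last by []. exfalso.
  have : eval (p N.+1 m0) a \in vals N M c a.
    apply: map_f; rewrite mem_iota; lia.
  rewrite hv mem_nseq (hz a) /=; by case/andP.
by exists (vals N M c (fun _ _ => false)); rewrite F_val // /vals size_map size_iota T_false.
Qed.

Lemma bb_lt N u : bb N u < bb N u.+1.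
Proof. by case: (C_spec N (Cantor.of_nat u).1 (bb N u)). Qed.

Lemma bb_mono N u u' : u < u' -> bb N u.+1 <= bb N u'.
Proof.
elim: u' => // u' IH; rewrite ltnS leq_eqVlt => /orP[/eqP->//|h].
exact: leq_trans (IH h) (ltnW (bb_lt _ _)).
Qed.

Lemma sz1_pos N s t : 0 < sz1 N s t.
Proof. rewrite /sz1 subn_gt0; exact: bb_lt. Qed.

Lemma lo1_sz1 N s t : lo1 N s t + sz1 N s t <= lo1 N s t.+1.
Proof.
rewrite /lo1 /sz1; have := bb_lt N (uu s t); have := bb_mono N (cantor_lt s t).
rewrite /uu; lia.
Qed.

Lemma nextgood_spec i j N : N < nextgood i j N /\ Good i j (nextgood i j N).
Proof. rewrite /nextgood; apply: (epsilon_spec (inhabits 0) (fun n => N < n /\ Good i j n)); exact: H3. Qed.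

Lemma rows_spec n m t : n.+1 + t < rows n m t /\ rows n m t < rows n m t.+1 /\ Good n m (rows n m t).
Proof.
elim: t => [|t [IH1 [IH2 IH3]]] /=.
  have [h1 h2] := nextgood_spec n m n.+1; have [h3 _] := nextgood_spec n m (nextgood n m n.+1).
  by rewrite addn0.
have [h3 h4] := nextgood_spec n m (rows n m t).
have [h5 _] := nextgood_spec n m (nextgood n m (rows n m t)).
split; [lia|split=> //].
Qed.


Lemma sel_T k N s t : T k.+1 N.+1 (sel k.+2 N s t) = T k.+2 N s.
Proof.
rewrite /sel; destruct (excluded_middle_informative (cnd k.+2 N s)) as [hc|hc]; rewrite /=.
  rewrite (T_var hc) T_var; first by rewrite /ijof Cantor.cancel_of_to.
  move: hc; rewrite /cnd /ijof Cantor.cancel_of_to /= => [[h1 h2]]; split; first lia.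
  by rewrite addSnnS.
rewrite (T_zero hc) T_zero //; rewrite /cnd /ijof !Cantor.cancel_of_to /= => [[h _]]; lia.
Qed.

Lemma rt_pos n k j : 0 < k -> rt n (OFin k j) = T k n j.
Proof. by case: k. Qed.

Lemma Q_block n m t : Q n m (bb n (uu m t)) (bb n (uu m t).+1).
Proof. rewrite [bb n (uu m t).+1]/= {2}/uu Cantor.cancel_of_to; exact: C_spec. Qed.

Lemma block_map (A : Type) (f : nat -> A) n m t :
  [seq f (Ewalk (lo1 n m) (sz1 n m) i) | i <- iota (Jw (sz1 n m) t) (Jw (sz1 n m) t.+1 - Jw (sz1 n m) t)]
  = [seq f x | x <- iota (bb n (uu m t)).+1 (bb n (uu m t).+1 - bb n (uu m t))].
Proof.
rewrite (map_comp f) Ewalk_block //; try exact: sz1_pos; try exact: lo1_sz1.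
Qed.

Lemma theq_ok : in_R_oo theq /\ forall n m, teq (rterm theq n (OFin 0 m)) (p n m).
Proof.
split; last by [].
split; [|split; [|split]].
- move=> [k j|j] /= hl n m; last first; first subst j.
    split; first by [].
    split. move=> i /=; left; have [_ [h _]] := rows_spec n m i; have [h1 _] := rows_spec n m i; have [h2 _] := rows_spec n m i.+1; rewrite -[nextgood n m (rows n m i)]/(rows n m i.+1); lia.
    split. move=> [k' j'|j'] //= _; exists k'; left; have [h _] := rows_spec n m k'; lia.
    split. move=> m' hm i i' /= [_]; rewrite /topslot => /cantor_inj [] /cantor_inj [] /hm //.
    split; first by [].
    by move=> k b; exists [:: b]; rewrite /= subSnn.
  case: hl => hk ->; case: k hk => [//|[|k]] _.
  + split; first by move=> i /=; left.
    split. move=> i /=; right; split=> //; apply: Ewalk_incr; [exact: sz1_pos | exact: lo1_sz1].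
    split. move=> [k' j'|j'] //= hb; exists j'.+1; right; split; first lia.
      apply: Ewalk_ge; [exact: sz1_pos | exact: lo1_sz1].
    split. move=> m' hm i i' /= [e].
      have [t ht] := @Ewalk_in (lo1 n m) (sz1 n m) (sz1_pos n m) i.
      have [t' ht'] := @Ewalk_in (lo1 n m') (sz1 n m') (sz1_pos n m') i'.
      rewrite e /lo1 /sz1 in ht; rewrite /lo1 /sz1 in ht'.
      have hne : uu m t <> uu m' t' by move/cantor_inj => [] /hm.
      case: (ltngtP (uu m t) (uu m' t')) => hu.
      * have := bb_mono n hu; have := bb_lt n (uu m t); lia.
      * have := bb_mono n hu; have := bb_lt n (uu m' t'); lia.
      * by [].
    split. move=> t /=; exact: Jw_incr (sz1_pos n m) t.
    move=> t b /=; have [bs [hs hb]] := F_surj b (Q_block n m t).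
    by exists bs; rewrite Jw_diff.
  + split. move=> i /=; left; lia.
    split. move=> i /=; right; split=> //; rewrite /sel; apply: cantor_mono; exact: cantor_lt.
    split. move=> [k' j'|j'] //= hb; case: (ltnP k' k.+1) => hk'.
        by exists 0; left.
      exists j'.+1; right; split; first lia.
      rewrite /sel; exact: leq_trans (cantor_ge m j'.+1) (cantor_ge _ _).
    split. move=> m' hm i i' /= [] /cantor_inj [] _ /cantor_inj [] /hm //.
    split; first by [].
    by move=> t b; exists [:: b]; rewrite /= subSnn.
- by move=> n m a; rewrite /= add0n.
- move=> n [k j|j] //= _; case: k => [|k]; first exact: H1.
  case: (excluded_middle_informative (cnd k.+1 n j)) => hc; [rewrite T_var // | rewrite T_zero //].
    case: hc => hc _; exists (var_term (ijof j).1 (ijof j).2); split=> // v; rewrite inE => /eqP -> /=; exact: hc.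
  by exists zero_term; split => // v; rewrite in_nil.
- move=> n m [k j|j] /= hl; exists 0 => a t _; last first.
    rewrite hl /g /= subSnn /= add0n.
    have [h [_ hg]] := rows_spec n m t.
    have hpos : 0 < rows n m t - n.+1 by lia.
    case e: (rows n m t - n.+1) hpos => [//|K] _; rewrite -e.
    rewrite T_var; first by rewrite /ijof /topslot !Cantor.cancel_of_to.
    rewrite /cnd /ijof /topslot !Cantor.cancel_of_to /=; split => //.
    rewrite subnKC //; lia.
  case: hl => hk ->; case: k hk => [//|[|k]] _.
  + rewrite /g /= (block_map (fun x => eval (p n.+1 x) a)) add0n.
    exact: (esym (F_val a (Q_block n m t))).
  + by rewrite /g /= subSnn /= sel_T add0n.
Qed.

End Main.

Theorem mainTheorem16 (p : nat -> nat -> term) :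
  (forall n m, depends_only (fun v => (v.1 < n)%N) (p n m)) ->
  (forall n M, exists m, (M < m)%N /\ teq (p n m) zero_term) ->
  (forall i j N, exists n, (N < n)%N /\
     forall M, exists ms : seq nat,
       ms <> [::] /\ all (fun m => (M < m)%N) ms /\
       determined (var_term i j) [seq p n m | m <- ms]) ->
  exists q : Relt, in_R_oo q /\ forall n m, teq (rterm q n (OFin 0 m)) (p n m).
Proof.
move=> H1 H2 H3; exists (theq p); exact: theq_ok.
Qed.
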